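(* Let $p$ and $p'$ be ordered quadruples of distinct points of $\partial\mathbf H^n_{\mathbb C}$. Then there exists an anti-holomorphic isometry of $\mathbf H^n_{\mathbb C}$ mapping $p_i$ to $p'_i$ for each $i$ if and only if the normalized Gram matrix of $p'$ is the complex conjugate of the normalized Gram matrix of $p$.
   Context: $\mathbb C^{n,1}$ is $\mathbb C^{n+1}$ with the Hermitian form $\langle Z,W\rangle=z_1\overline{w}_{n+1}+z_2\overline{w}_2+\cdots+z_n\overline{w}_n+z_{n+1}\overline{w}_1$; $\mathbf H^n_{\mathbb C}$ and $\partial\mathbf H^n_{\mathbb C}$ are the negative and null lines in $\mathbb P\mathbb C^n$. The full isometry group is generated by $\mathrm{PU}(n,1)$ and complex conjugation; anti-holomorphic isometries are those not in $\mathrm{PU}(n,1)$. For a quadruple with null lifts $P_i$, a Gram matrix is $(\langle P_i,P_j\rangle)$; the normalized Gram matrix of $p$ is the unique Gram matrix $G=(g_{ij})$ (for suitable lifts) with $g_{ii}=0$, $g_{12}=g_{23}=g_{34}=1$, $|g_{13}|=1$. *)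

(* Defs.v *)
From HB Require Import structures.
From mathcomp Require Import all_boot all_order all_algebra all_fingroup.
From mathcomp Require Import reals complex.
Set Implicit Arguments. Unset Strict Implicit. Unset Printing Implicit Defensive.
Import Order.TTheory GRing.Theory Num.Theory.
Local Open Scope ring_scope.
Local Open Scope complex_scope.

Section Defs.
Variable R : realType.
Notation C := R[i].
Variable n : nat.

(* Vectors of C^{n,1} = C^{n+1}; coordinate k (1-based in the paper) is index k-1. *)
Notation vec := 'cV[C]_(n.+1).

(* The Hermitian form <Z,W> = z_1 conj(w_{n+1}) + z_2 conj(w_2) + ... + z_n conj(w_n)
   + z_{n+1} conj(w_1): the transposition swaps the first and last coordinates. *)
Definition herm (Z W : vec) : C :=
  \sum_(i < n.+1) Z i 0 * (W (tperm ord0 ord_max i) 0)^*.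

(* a null vector: nonzero lift of a point of the boundary of complex hyperbolic space *)
Definition null_vec (Z : vec) : Prop := Z != 0 /\ herm Z Z = 0.

Definition same_line (Z W : vec) : Prop := exists c : C, c != 0 /\ W = c *: Z.

(* P : 'I_4 -> vec lifts an ordered quadruple of distinct points of the boundary *)
Definition bd_quadruple (P : 'I_4 -> vec) : Prop :=
  (forall i, null_vec (P i)) /\ (forall i j, i != j -> ~ same_line (P i) (P j)).

Definition unitary (A : 'M[C]_(n.+1)) : Prop :=
  forall Z W : vec, herm (A *m Z) (A *m W) = herm Z W.

Definition conjv (Z : vec) : vec := map_mx (fun z : C => z^*) Z.

(* Anti-holomorphic isometries of H^n_C are exactly the projectivisations of
   Z |-> A conj(Z) with A in U(n,1).  There is one mapping the point [P i] to [P' i]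
   for every i iff: *)
Definition antiholo_iso_maps (P P' : 'I_4 -> vec) : Prop :=
  exists A : 'M[C]_(n.+1), unitary A /\
    forall i, same_line (A *m conjv (P i)) (P' i).

Definition i0 : 'I_4 := @Ordinal 4 0 isT.
Definition i1 : 'I_4 := @Ordinal 4 1 isT.
Definition i2 : 'I_4 := @Ordinal 4 2 isT.
Definition i3 : 'I_4 := @Ordinal 4 3 isT.

Definition normalized_gram (P : 'I_4 -> vec) (G : 'M[C]_4) : Prop :=
  exists lam : 'I_4 -> C, (forall i, lam i != 0) /\
    (forall i j, G i j = herm (lam i *: P i) (lam j *: P j)) /\
    (forall i, G i i = 0) /\
    G i0 i1 = 1 /\ G i1 i2 = 1 /\ G i2 i3 = 1 /\ `|G i0 i2| = 1.

End Defs.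

Definition cconjmx (R : realType) (m k : nat) (G : 'M[R[i]]_(m, k)) : 'M[R[i]]_(m, k) :=
  map_mx (fun z : R[i] => z^*) G.

(* Main.v *)
Require Import Defs.
From HB Require Import structures.
From mathcomp Require Import all_boot all_order all_algebra all_fingroup.
From mathcomp Require Import reals complex.
From mathcomp Require Import ring.
Set Implicit Arguments. Unset Strict Implicit. Unset Printing Implicit Defensive.
Import Order.TTheory GRing.Theory Num.Theory.
Local Open Scope ring_scope.


Section Herm.
Variable R : realType.
Variable n : nat.
Local Notation C := R[i].
Local Notation vec := 'cV[C]_(n.+1).
Local Notation s := (tperm (@ord0 n) ord_max).

Lemma hermDl (X Y W : vec) : herm (X + Y) W = herm X W + herm Y W.
Proof. by rewrite /herm -big_split; apply: eq_bigr => i _; rewrite mxE mulrDl. Qed.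
Lemma hermDr (X Y W : vec) : herm W (X + Y) = herm W X + herm W Y.
Proof. by rewrite /herm -big_split; apply: eq_bigr => i _; rewrite mxE rmorphD mulrDr. Qed.
Lemma hermZl a (X W : vec) : herm (a *: X) W = a * herm X W.
Proof. by rewrite /herm mulr_sumr; apply: eq_bigr => i _; rewrite mxE mulrA. Qed.
Lemma hermZr a (X W : vec) : herm W (a *: X) = a^* * herm W X.
Proof.
by rewrite /herm mulr_sumr; apply: eq_bigr => i _; rewrite mxE rmorphM mulrCA.
Qed.
Lemma hermNl (X W : vec) : herm (- X) W = - herm X W.
Proof. by rewrite -scaleN1r hermZl mulN1r. Qed.
Lemma hermNr (X W : vec) : herm W (- X) = - herm W X.
Proof. by rewrite -scaleN1r hermZr rmorphN rmorph1 mulN1r. Qed.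
Lemma hermBl (X Y W : vec) : herm (X - Y) W = herm X W - herm Y W.
Proof. by rewrite hermDl hermNl. Qed.
Lemma hermBr (X Y W : vec) : herm W (X - Y) = herm W X - herm W Y.
Proof. by rewrite hermDr hermNr. Qed.
Lemma herm0l (W : vec) : herm 0 W = 0.
Proof. by rewrite -(scale0r 0) hermZl mul0r. Qed.

Lemma hermC (X W : vec) : (herm X W)^* = herm W X.
Proof.
rewrite /herm rmorph_sum (reindex_inj (@perm_inj _ s)) /=.
apply: eq_bigr => i _; rewrite rmorphM /=. rewrite tpermK. rewrite (@conjCK _ (W i 0)). by rewrite mulrC.
Qed.

Lemma herm_delta (X : vec) j : herm X (delta_mx j 0) = X (s j) 0.
Proof.
rewrite /herm (bigD1 (s j)) //= big1 ?addr0.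
  by rewrite mxE tpermK !eqxx /= conjC1 mulr1.
move=> i Hi; rewrite mxE andbT.
case: eqP => [Hij|]; last by rewrite conjC0 mulr0.
by move: Hi; rewrite -Hij tpermK eqxx.
Qed.

Lemma conjcE (z : C) : conjc z = z^*.
Proof. by []. Qed.
Lemma conjv_scale a (X : vec) : conjv (a *: X) = a^* *: conjv X.
Proof. by apply/matrixP => i j; rewrite !mxE !conjcE rmorphM. Qed.

Lemma herm_conjv (X W : vec) : herm (conjv X) (conjv W) = (herm X W)^*.
Proof.
by rewrite /herm rmorph_sum; apply: eq_bigr => i _; rewrite !mxE !conjcE rmorphM.
Qed.

Lemma herm_mid0 (w : vec) : w ord0 0 = 0 -> w ord_max 0 = 0 -> herm w w = 0 -> w = 0.
Proof.
move=> h0 hn hw.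
have E : herm w w = \sum_i w i 0 * (w i 0)^*.
  rewrite /herm; apply: eq_bigr => i _.
  have [->|H0] := eqVneq i ord0; first by rewrite h0 !mul0r.
  have [->|Hn] := eqVneq i ord_max; first by rewrite hn !mul0r.
  by rewrite tpermD // eq_sym.
have := psumr_eq0P (P := xpredT) (fun i _ => mul_conjC_ge0 (w i 0)).
rewrite -E => /(_ hw) H.
apply/matrixP => i j; rewrite (ord1 j) mxE.
by apply/eqP; rewrite -mul_conjC_eq0; apply/eqP; apply: H.
Qed.

Definition unitary' (A : 'M[C]_(n.+1)) := forall Z W : vec, herm (A *m Z) (A *m W) = herm Z W.

Definition swapm : 'M[C]_(n.+1) := \matrix_(i, j) ((s i == j)%:R).
Lemma swapmE (Z : vec) i : (swapm *m Z) i 0 = Z (s i) 0.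
Proof.
rewrite mxE (bigD1 (s i)) //= big1 ?addr0; first by rewrite mxE eqxx mul1r.
by move=> j Hj; rewrite mxE eq_sym (negbTE Hj) mul0r.
Qed.
Lemma swapm_unitary : unitary swapm.
Proof.
move=> Z W; rewrite /herm (reindex_inj (@perm_inj _ s)) /=.
by apply: eq_bigr => i _; rewrite !swapmE !tpermK.
Qed.

Definition flat (w : vec) : 'rV[C]_(n.+1) := \row_j (w (s j) 0)^*.
Lemma flatE (w Z : vec) : flat w *m Z = (herm Z w)%:M.
Proof.
apply/matrixP => i j; rewrite (ord1 i) (ord1 j) !mxE /= mulr1n /herm.
by apply: eq_bigr => k _; rewrite mxE mulrC.
Qed.
Definition reflm (c : C) (w : vec) : 'M[C]_(n.+1) := 1%:M - c *: (w *m flat w).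
Lemma reflmE c w (Z : vec) : reflm c w *m Z = Z - (c * herm Z w) *: w.
Proof.
by rewrite /reflm mulmxBl mul1mx -scalemxAl -mulmxA flatE mul_mx_scalar scalerA.
Qed.

Lemma refl_unitary_gen (k : C) (w : vec) : k != 0 -> herm w w = k + k^* ->
  unitary (reflm k^-1 w).
Proof.
move=> hk hww Z W; rewrite !reflmE !hermBl !hermBr !hermZl !hermZr hww.
rewrite -[herm w W]hermC.
set p := herm Z w; set q := herm W w.
rewrite rmorphM fmorphV /=.
have hk' : k^* != 0 by rewrite conjC_eq0.

field.

by rewrite hk hk'.
Qed.

Lemma refl_unitary (X Y : vec) : herm X X = herm Y Y -> herm X (X - Y) != 0 ->
  unitary (reflm (herm X (X - Y))^-1 (X - Y)).
Proof.
move=> hXY hk; apply: refl_unitary_gen => //.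
rewrite hermC !hermBl !hermBr -hXY; ring.
Qed.

Lemma unitary_mul (A B : 'M[C]_(n.+1)) : unitary A -> unitary B -> @unitary R n (A *m B).
Proof. by move=> hA hB Z W; rewrite -!mulmxA hA hB. Qed.

Lemma unitary1 : unitary (1%:M : 'M[C]_(n.+1)).
Proof. by move=> Z W; rewrite !mul1mx. Qed.

Lemma unitary_inj (A : 'M[C]_(n.+1)) (Z : vec) : unitary A -> A *m Z = 0 -> Z = 0.
Proof.
move=> hA hZ; apply/matrixP => i j; rewrite (ord1 j) mxE.
by rewrite -(tpermK ord0 ord_max i) -herm_delta -hA hZ herm0l.
Qed.

Lemma unitary_inv (A : 'M[C]_(n.+1)) : unitary A ->
  exists B, unitary B /\ forall Z : vec, B *m (A *m Z) = Z.
Proof.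
move=> hA.
have uA : A \in unitmx.
  rewrite -unitmx_tr -row_free_unit -kermx_eq0; apply/eqP/row_matrixP => i.
  rewrite row0; set u := row i _.
  have hu : u *m A^T = 0 by rewrite /u -row_mul mulmx_ker row0.
  have : A *m u^T = 0 by rewrite -[A]trmxK -trmx_mul hu trmx0.
  by move/(unitary_inj hA)/(congr1 trmx); rewrite trmxK trmx0.
exists (invmx A); split.
  by move=> Z W; rewrite -hA !mulmxA !mulmxV // !mul1mx.
by move=> Z; rewrite mulmxA mulVmx // mul1mx.
Qed.

Lemma refl_ex (X Y : vec) : herm X X = herm Y Y -> (herm X (X - Y) = 0 -> X = Y) ->
  exists U, unitary U /\ U *m X = Y /\ (forall Z : vec, herm Z (X - Y) = 0 -> U *m Z = Z).
Proof.
move=> hXY hc; have [hk|hk] := eqVneq (herm X (X - Y)) 0.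
  exists 1%:M; split; first exact: unitary1.
  by rewrite mul1mx hc //; split=> // Z _; rewrite mul1mx.
exists (reflm (herm X (X - Y))^-1 (X - Y)); split; first exact: refl_unitary.
split; first by rewrite reflmE mulVf // scale1r opprB addrC subrK.
by move=> Z hZ; rewrite reflmE hZ mulr0 scale0r subr0.
Qed.

Definition e0 : vec := delta_mx ord0 0.
Definition en : vec := delta_mx ord_max 0.
Lemma herm_e0 (Z : vec) : herm Z e0 = Z ord_max 0.
Proof. by rewrite /e0 herm_delta tpermL. Qed.
Lemma herm_en (Z : vec) : herm Z en = Z ord0 0.
Proof. by rewrite /en herm_delta tpermR. Qed.
Lemma herm_e0l (Z : vec) : herm e0 Z = (Z ord_max 0)^*.
Proof. by rewrite -hermC herm_e0. Qed.
Lemma herm_enl (Z : vec) : herm en Z = (Z ord0 0)^*.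
Proof. by rewrite -hermC herm_en. Qed.

Lemma hww_id (X Y : vec) : herm X X = herm Y Y ->
  herm (X - Y) (X - Y) = herm X (X - Y) + (herm X (X - Y))^*.
Proof. move=> h; rewrite hermC !hermBl !hermBr -h; ring. Qed.

Section Frame.
Variable hn : (0 < n)%N.
Lemma ord0_max : (ord0 : 'I_n.+1) != ord_max.
Proof. by rewrite -val_eqE /= neq_ltn hn. Qed.
Lemma e0_0 : e0 ord0 0 = 1. Proof. by rewrite mxE !eqxx. Qed.
Lemma e0_n : e0 ord_max 0 = 0. Proof. by rewrite mxE eq_sym (negbTE ord0_max). Qed.
Lemma en_0 : en ord0 0 = 0. Proof. by rewrite mxE (negbTE ord0_max). Qed.
Lemma en_n : en ord_max 0 = 1. Proof. by rewrite mxE !eqxx. Qed.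
Lemma herm_e0e0 : herm e0 e0 = 0. Proof. by rewrite herm_e0 e0_n. Qed.
Lemma herm_enen : herm en en = 0. Proof. by rewrite herm_en en_0. Qed.

Lemma subvE (X Y : vec) i : (X - Y) i 0 = X i 0 - Y i 0.
Proof. by rewrite !mxE. Qed.
Lemma conj_eq1 (x : C) : x^* = 1 -> x = 1.
Proof. by move=> h; rewrite -[x]conjCK h conjC1. Qed.
Lemma conj_eq0 (x : C) : x^* = 0 -> x = 0.
Proof. by move=> h; rewrite -[x]conjCK h conjC0. Qed.

Lemma frame (u v : vec) : herm u u = 0 -> herm v v = 0 -> herm u v = 1 ->
  exists T, unitary T /\ T *m u = e0 /\ T *m v = en.
Proof.
move=> hu hv huv.
have [T1 [uT1 hT1]] : exists T1, unitary T1 /\ (T1 *m u) ord_max 0 != 0.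
  have [h|h] := eqVneq (u ord_max 0) 0; last first.
    by exists 1%:M; split; [exact: unitary1 | rewrite mul1mx].
  exists swapm; split; first exact: swapm_unitary.
  rewrite swapmE tpermR; apply/eqP => h0.
  have u0 := herm_mid0 h0 h hu.
  by move: huv; rewrite u0 herm0l => /eqP; rewrite eq_sym oner_eq0.
set u1 := T1 *m u; set v1 := T1 *m v.
have hu1 : herm u1 u1 = 0 by rewrite uT1.
have hv1 : herm v1 v1 = 0 by rewrite uT1.
have huv1 : herm u1 v1 = 1 by rewrite uT1.
have [T2 [uT2 [hT2 _]]] : exists T2, unitary T2 /\ T2 *m u1 = e0 /\
    (forall Z : vec, herm Z (u1 - e0) = 0 -> T2 *m Z = Z).
  apply: refl_ex; first by rewrite hu1 herm_e0e0.
  rewrite hermBr hu1 herm_e0 sub0r => /eqP; rewrite oppr_eq0 => /eqP h.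
  by move: hT1; rewrite h eqxx.
set v2 := T2 *m v1.
have hv2 : herm v2 v2 = 0 by rewrite uT2.
have hv2n : v2 ord_max 0 = 1.
  by apply: conj_eq1; rewrite -herm_e0l -hT2 uT2.
have [T3 [uT3 [hT3 fT3]]] : exists T3, unitary T3 /\ T3 *m v2 = en /\
    (forall Z : vec, herm Z (v2 - en) = 0 -> T3 *m Z = Z).
  apply: refl_ex; first by rewrite hv2 herm_enen.
  move=> h; have h0 : v2 ord0 0 = 0.
    by move: h; rewrite hermBr hv2 herm_en sub0r => /eqP; rewrite oppr_eq0 => /eqP.
  apply/eqP; rewrite -subr_eq0; apply/eqP; apply: herm_mid0.
  - by rewrite subvE h0 en_0 subr0.
  - by rewrite subvE hv2n en_n subrr.
  - by rewrite hww_id ?hv2 ?herm_enen // h conjC0 addr0.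
exists (T3 *m T2 *m T1); split.
  by apply: unitary_mul => //; apply: unitary_mul.
split; last by rewrite -!mulmxA -/v1 -/v2.
rewrite -!mulmxA -/u1 hT2 fT3 //.
by rewrite herm_e0l subvE hv2n en_n subrr conjC0.
Qed.

Lemma step (X Y : vec) : herm X X = herm Y Y -> herm X e0 = herm Y e0 ->
  herm X en = herm Y en ->
  exists U, unitary U /\ U *m X = Y /\ (forall Z : vec, herm Z (X - Y) = 0 -> U *m Z = Z).
Proof.
move=> hXY h0 hn' ; apply: refl_ex => // h.
apply/eqP; rewrite -subr_eq0; apply/eqP; apply: herm_mid0.
- by rewrite -herm_en hermBl hn' subrr.
- by rewrite -herm_e0 hermBl h0 subrr.
- by rewrite hww_id // h conjC0 addr0.
Qed.

Lemma orth_of (Z X Y : vec) : herm X Z = herm Y Z -> herm Z (X - Y) = 0.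
Proof. by move=> h; rewrite -hermC hermBl h subrr conjC0. Qed.

Lemma I4_cases (P : 'I_4 -> Prop) : P i0 -> P i1 -> P i2 -> P i3 -> forall i, P i.
Proof.
move=> h0 h1 h2 h3 [[|[|[|[|k]]]] Hk] //.
- by rewrite (_ : Ordinal Hk = i0) //; apply: val_inj.
- by rewrite (_ : Ordinal Hk = i1) //; apply: val_inj.
- by rewrite (_ : Ordinal Hk = i2) //; apply: val_inj.
- by rewrite (_ : Ordinal Hk = i3) //; apply: val_inj.
Qed.

Lemma witt4 (X Y : 'I_4 -> vec) : (forall i j, herm (X i) (X j) = herm (Y i) (Y j)) ->
  herm (X i0) (X i0) = 0 -> herm (X i1) (X i1) = 0 -> herm (X i0) (X i1) = 1 ->
  exists A, unitary A /\ forall i, A *m X i = Y i.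
Proof.
move=> hG h0 h1 h01.
have [TX [uTX [TX0 TX1]]] := frame h0 h1 h01.
have [TY [uTY [TY0 TY1]]] : exists T, unitary T /\ T *m Y i0 = e0 /\ T *m Y i1 = en.
  by apply: frame; rewrite -hG.
have [BY [uBY hBY]] := unitary_inv uTY.
pose X' i := TX *m X i; pose Y' i := TY *m Y i.
have hG' i j : herm (X' i) (X' j) = herm (Y' i) (Y' j) by rewrite /X' /Y' uTX uTY.
have X'0 : X' i0 = e0 by []. have X'1 : X' i1 = en by [].
have Y'0 : Y' i0 = e0 by []. have Y'1 : Y' i1 = en by [].
have a1 : herm (X' i2) e0 = herm (Y' i2) e0 by rewrite -{1}X'0 hG' Y'0.
have a2 : herm (X' i2) en = herm (Y' i2) en by rewrite -{1}X'1 hG' Y'1.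
have [U2 [uU2 [hU2 fU2]]] := @step (X' i2) (Y' i2) (hG' _ _) a1 a2.
have U2e0 : U2 *m e0 = e0.
  by apply: fU2; apply: orth_of.
have U2en : U2 *m en = en.
  by apply: fU2; apply: orth_of.
have U2X i : i != i3 -> U2 *m X' i = Y' i.
  move: i; apply: I4_cases => // _.
  - by rewrite X'0 U2e0 Y'0.
  - by rewrite X'1 U2en Y'1.
set X3 := U2 *m X' i3.
have gX3 i : i != i3 -> herm X3 (Y' i) = herm (Y' i3) (Y' i).
  by move=> hi; rewrite -{1}(U2X i hi) /X3 uU2 hG'.
have b0 : herm X3 X3 = herm (Y' i3) (Y' i3) by rewrite /X3 uU2 hG'.
have b1 : herm X3 e0 = herm (Y' i3) e0 by rewrite -Y'0 gX3.
have b2 : herm X3 en = herm (Y' i3) en by rewrite -Y'1 gX3.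
have [U3 [uU3 [hU3 fU3]]] := @step X3 (Y' i3) b0 b1 b2.
exists (BY *m U3 *m U2 *m TX); split.
  by apply: unitary_mul => //; apply: unitary_mul => //; exact: unitary_mul.
have key i : U3 *m (U2 *m X' i) = Y' i.
  have [->|hi] := eqVneq i i3; first exact: hU3.
  by rewrite U2X // fU3 //; apply: orth_of; rewrite gX3.
by move=> i; rewrite -!mulmxA -/(X' i) key hBY.
Qed.
End Frame.
End Herm.

Section Main.
Variable R : realType.
Variable n : nat.
Local Notation C := R[i].
Local Notation vec := 'cV[C]_(n.+1).

Lemma conjM (x y : C) : (x * y)^* = x^* * y^*.
Proof. exact: rmorphM. Qed.
Lemma conjK (x : C) : x^*^* = x.
Proof. exact: conjCK. Qed.
Lemma conj1eq (x y : C) : 1 = x * y^* -> 1 = x^* * y.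
Proof. by move=> h; rewrite -[y]conjK -conjM -h conjC1. Qed.

Lemma key_gram (A : 'M[C]_(n.+1)) (a b : C) (Qi Qj Pi Pj : vec) :
  unitary A -> Pi = a *: (A *m conjv Qi) -> Pj = b *: (A *m conjv Qj) ->
  herm Pi Pj = a * b^* * (herm Qi Qj)^*.
Proof.
move=> uA -> ->; rewrite hermZl hermZr uA herm_conjv; ring.
Qed.

Lemma mu_ex (A : 'M[C]_(n.+1)) (P P' : vec) (l l' : C) : l != 0 ->
  same_line (A *m conjv P) P' -> exists m, l' *: P' = m *: (A *m conjv (l *: P)).
Proof.
move=> hl [c [_ ->]]; exists (l' * c / l^*).
rewrite conjv_scale -scalemxAr !scalerA; congr (_ *: _).
have hl' : l^* != 0 by rewrite conjC_eq0.
field; by rewrite hl'.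
Qed.
End Main.

Unset Implicit Arguments.
Theorem corollary2p2 (R : realType) (n : nat) (hn : (0 < n)%N)
    (P P' : 'I_4 -> 'cV[R[i]]_(n.+1)) (G G' : 'M[R[i]]_4) :
  bd_quadruple P -> bd_quadruple P' ->
  normalized_gram P G -> normalized_gram P' G' ->
  (antiholo_iso_maps P P' <-> G' = cconjmx G).
Proof.
move=> _ _ [lam [hlam [hG [hGd [h01 [h12 [h23 h02]]]]]]].
move=> [lam' [hlam' [hG' [hGd' [h01' [h12' [h23' h02']]]]]]].
split.
- move=> [A [uA hA]].
  have hmu i := mu_ex (lam' i) (hlam i) (hA i).
  have [m0 E0] := hmu i0. have [m1 E1] := hmu i1.
  have [m2 E2] := hmu i2. have [m3 E3] := hmu i3.
  have K01 := key_gram uA E0 E1. have K12 := key_gram uA E1 E2.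
  have K23 := key_gram uA E2 E3. have K02 := key_gram uA E0 E2.
  rewrite -hG' -hG h01 h01' conjC1 mulr1 in K01.
  rewrite -hG' -hG h12 h12' conjC1 mulr1 in K12.
  rewrite -hG' -hG h23 h23' conjC1 mulr1 in K23.
  rewrite -hG' -hG in K02.
  have m1n0 : m1 != 0 by apply/eqP => h; move: K01; rewrite h conjC0 mulr0 => /eqP; rewrite oner_eq0.
  have m2n0 : m2 != 0 by apply/eqP => h; move: K12; rewrite h conjC0 mulr0 => /eqP; rewrite oner_eq0.
  have e20 : m2 = m0.
    apply/(mulIf (x:=m1^*)); first by rewrite conjC_eq0.
    by rewrite -K01 mulrC -conj1eq.
  have e31 : m3 = m1.
    rewrite -[m3]conjK -[m1]conjK; congr (_^*).
    apply/(mulfI (x:=m2)) => //.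
    by rewrite -K23 mulrC; apply: conj1eq.
  have nm0 : m0 * m0^* = 1.
    by rewrite -normCK expr2; move: h02'; rewrite K02 !normrM !norm_conjC h02 e20 mulr1.
  have m0n0 : m0 != 0 by apply/eqP => h; move: nm0; rewrite h mul0r => /eqP; rewrite eq_sym oner_eq0.
  have e10 : m1 = m0.
    rewrite -[m1]conjK -[m0]conjK; congr (_^*).
    by apply/(mulfI m0n0); rewrite -K01 nm0.
  have hall : forall i, lam' i *: P' i = m0 *: (A *m conjv (lam i *: P i)).
    apply: I4_cases; first exact: E0.
    - by rewrite -e10; exact: E1.
    - by rewrite -e20; exact: E2.
    - by rewrite -e10 -e31; exact: E3.
  apply/matrixP => i j; rewrite hG' (key_gram uA (hall i) (hall j)) -hG nm0 mul1r.
  by rewrite /cconjmx mxE conjcE.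
- move=> hGG.
  have hc i j : G' i j = (G i j)^* by rewrite hGG /cconjmx mxE conjcE.
  pose X i := conjv (lam i *: P i); pose Y i := lam' i *: P' i.
  have [A [uA hA]] : exists A, unitary A /\ forall i, A *m X i = Y i.
    apply: (witt4 hn).
    - by move=> i j; rewrite /X herm_conjv -hG -hc hG'.
    - by rewrite /X herm_conjv -hG hGd conjC0.
    - by rewrite /X herm_conjv -hG hGd conjC0.
    - by rewrite /X herm_conjv -hG h01 conjC1.
  exists A; split => // i; exists ((lam i)^* / lam' i); split.
    by rewrite mulf_neq0 ?invr_eq0 ?conjC_eq0.
  have := hA i; rewrite /X /Y conjv_scale -scalemxAr => h.
  by rewrite mulrC -scalerA h scalerA mulVf ?scale1r.
Qed.
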